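(* Let $m,n,k$ be positive integers. Then \begin{align*} |\mathrm{WHom}(P_m,P_{n}\square P_{k})|=&\,4\sum_{i=0}^{\lfloor n/2\rfloor-1}\sum_{j=0}^{\lfloor k/2\rfloor-1}|\mathrm{WHom}^{ij}(P_m,P_{n}\square P_{k})| +(1-(-1)^n)\sum_{j=0}^{\lfloor k/2\rfloor-1}|\mathrm{WHom}^{\lfloor n/2\rfloor j}(P_m,P_{n}\square P_{k})|\\ &+(1-(-1)^k)\sum_{i=0}^{\lfloor n/2\rfloor-1}|\mathrm{WHom}^{i\lfloor k/2\rfloor}(P_m,P_{n}\square P_{k})| +\tfrac14(1-(-1)^n)(1-(-1)^k)\,|\mathrm{WHom}^{\lfloor n/2\rfloor\lfloor k/2\rfloor}(P_m,P_{n}\square P_{k})|, \end{align*} where, for $0\le i\le n-1$ and $0\le j\le k-1$, $$|\mathrm{WHom}^{ij}(P_m,P_n\square P_k)|=\sum_{h=0}^{m-1}\binom{m-1}{h}\,|\mathrm{Hom}^i(P_{h+1},P_n)|\,|\mathrm{WHom}^j(P_{m-h},P_k)|.$$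
   Context: For a positive integer $n$, $P_n$ denotes the path with vertex set $\{0,1,\dots,n-1\}$ and edge set $\{\{i,i+1\} : i=0,\dots,n-2\}$. The Cartesian product $P_n\square P_k$ has vertex set $\{0,\dots,n-1\}\times\{0,\dots,k-1\}$, with $\{(a,u),(b,v)\}$ an edge iff either $a=b$ and $\{u,v\}\in E(P_k)$, or $\{a,b\}\in E(P_n)$ and $u=v$. A homomorphism $f:G\to H$ is a map $V(G)\to V(H)$ with $\{f(x),f(y)\}\in E(H)$ for all $\{x,y\}\in E(G)$; a weak homomorphism is a map with $f(x)=f(y)$ or $\{f(x),f(y)\}\in E(H)$ for all $\{x,y\}\in E(G)$. $\mathrm{WHom}(G,H)$ is the set of weak homomorphisms from $G$ to $H$. $\mathrm{Hom}^i(P_a,P_n)$ is the set of homomorphisms $f:P_a\to P_n$ with $f(0)=i$; $\mathrm{WHom}^j(P_a,P_k)$ is the set of weak homomorphisms $f:P_a\to P_k$ with $f(0)=j$; $\mathrm{WHom}^{ij}(P_m,P_n\square P_k)$ is the set of weak homomorphisms $f:P_m\to P_n\square P_k$ with $f(0)=(i,j)$. *)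

(* Defs.v *)
From mathcomp Require Import all_boot all_order all_algebra.
Set Implicit Arguments. Unset Strict Implicit. Unset Printing Implicit Defensive.

Definition pathrel (n : nat) : rel 'I_n :=
  fun a b => (a.+1 == b :> nat) || (b.+1 == a :> nat).

Definition boxrel (n k : nat) : rel ('I_n * 'I_k) :=
  fun u v => ((u.1 == v.1) && pathrel u.2 v.2) || (pathrel u.1 v.1 && (u.2 == v.2)).

Definition is_hom (T U : finType) (G : rel T) (H : rel U) (f : T -> U) : bool :=
  [forall x, forall y, G x y ==> H (f x) (f y)].
Definition is_whom (T U : finType) (G : rel T) (H : rel U) (f : T -> U) : bool :=
  [forall x, forall y, G x y ==> ((f x == f y) || H (f x) (f y))].

Definition nWHom_grid (m n k : nat) : nat :=
  #|[set f : {ffun 'I_m -> 'I_n * 'I_k} | is_whom (@pathrel m) (@boxrel n k) f]|.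

Definition nWHom_grid_at (m n k i j : nat) : nat :=
  #|[set f : {ffun 'I_m -> 'I_n * 'I_k} | is_whom (@pathrel m) (@boxrel n k) f &&
     [exists x : 'I_m, [&& val x == 0, val (f x).1 == i & val (f x).2 == j]]]|.

Definition nHom_at (a n i : nat) : nat :=
  #|[set f : {ffun 'I_a -> 'I_n} | is_hom (@pathrel a) (@pathrel n) f &&
     [exists x : 'I_a, (val x == 0) && (val (f x) == i)]]|.

Definition nWHom_at (a k j : nat) : nat :=
  #|[set f : {ffun 'I_a -> 'I_k} | is_whom (@pathrel a) (@pathrel k) f &&
     [exists x : 'I_a, (val x == 0) && (val (f x) == j)]]|.

(* Main.v *)
Require Import Defs.
From mathcomp Require Import all_boot all_order all_algebra.
From mathcomp Require Import zify.
Import GRing.Theory Num.Theory.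
Set Implicit Arguments. Unset Strict Implicit. Unset Printing Implicit Defensive.

Section Walk.
Variable U : finType.
Variable R : rel U.

Definition walkP m (f : {ffun 'I_m -> U}) : bool :=
  [forall x : 'I_m, forall y : 'I_m, (x.+1 == y :> nat) ==> R (f x) (f y)].

Fixpoint walkc (m : nat) (v : U) : nat :=
  if m is m'.+1 then \sum_(u | R v u) walkc m' u else 1.

Definition Sw m v := [set f : {ffun 'I_m.+1 -> U} | walkP f && (f ord0 == v)].

Definition consf m (v : U) (g : {ffun 'I_m.+1 -> U}) : {ffun 'I_m.+2 -> U} :=
  [ffun x => if unlift ord0 x is Some y then g y else v].
Definition tailf m (f : {ffun 'I_m.+2 -> U}) : {ffun 'I_m.+1 -> U} :=
  [ffun x => f (lift ord0 x)].

Lemma consf0 m v g : @consf m v g ord0 = v.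
Proof. by rewrite ffunE unlift_none. Qed.
Lemma consfS m v g y : @consf m v g (lift ord0 y) = g y.
Proof. by rewrite ffunE liftK. Qed.

Lemma walk_consf m v g : walkP (@consf m v g) = R v (g ord0) && walkP g.
Proof.
apply/idP/idP.
- move=> /forallP W; apply/andP; split.
  + have := forallP (W ord0) (lift ord0 ord0).
    by rewrite consf0 consfS lift0 /=; apply.
  + apply/forallP => x; apply/forallP => y; apply/implyP => xy.
    have := forallP (W (lift ord0 x)) (lift ord0 y).
    by rewrite !consfS !lift0 /= eqSS xy; apply.
- case/andP => Hv /forallP W; apply/forallP => x; apply/forallP => y; apply/implyP.
  case: (unliftP ord0 x) => [x' ->|->]; case: (unliftP ord0 y) => [y' ->|->];
    rewrite ?consf0 ?consfS ?lift0 //=.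
  + by rewrite eqSS => xy; have := forallP (W x') y'; rewrite xy; apply.
  + move=> e; have -> : y' = ord0 by apply/val_inj => /=; lia.
    exact: Hv.
Qed.

Lemma card_Sw m v : #|Sw m v| = walkc m v.
Proof.
elim: m v => [|m IH] v /=.
  have -> : Sw 0 v = [set [ffun=> v]]; last by rewrite cards1.
  apply/setP => f; rewrite !inE; apply/andP/eqP.
  - case=> _ /eqP <-; apply/ffunP => x; rewrite ffunE; congr (f _); apply/val_inj.
    by case: x => [[]].
  - move=> ->; split; last by rewrite ffunE.
    by apply/forallP => x; apply/forallP => y; apply/implyP; case: x => [[]] //; case: y => [[|]].
have -> : Sw m.+1 v = consf v @: [set g : {ffun 'I_m.+1 -> U} | R v (g ord0) && walkP g].
  apply/setP => f; rewrite !inE; apply/andP/imsetP.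
  - case=> Wf /eqP f0; exists (tailf f).
      rewrite inE -walk_consf.
      have -> : consf v (tailf f) = f.
        apply/ffunP => x; case: (unliftP ord0 x) => [x' ->|->];
          by rewrite ?consf0 ?consfS ?ffunE.
      done.
    apply/ffunP => x; case: (unliftP ord0 x) => [x' ->|->];
          by rewrite ?consf0 ?consfS ?ffunE.
  - case=> g; rewrite inE => Hg ->; by rewrite walk_consf consf0.
rewrite card_imset; last first.
  move=> g1 g2 e; apply/ffunP => x.
  by rewrite -(consfS v g1) -(consfS v g2) e.
rewrite -sum1_card.
rewrite (partition_big (fun g : {ffun 'I_m.+1 -> U} => g ord0) (R v)); last first.
  by move=> g; rewrite inE => /andP[].
apply: eq_bigr => u Ru; rewrite -IH -sum1_card; apply: eq_bigl => g.
rewrite !inE; apply/andP/andP => [[/andP[_ ->] ->]|[-> /eqP e]] //.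
by rewrite e Ru eqxx.
Qed.

Lemma walkc_sym (s : U -> U) : involutive s -> (forall a b, R (s a) (s b) = R a b) ->
  forall m v, walkc m (s v) = walkc m v.
Proof.
move=> sK sR; elim=> [|m IH] v //=.
rewrite (reindex_inj (inv_inj sK)) /=; apply: eq_big => u; first by rewrite sR.
by rewrite IH.
Qed.

End Walk.

Lemma pathrel_sym n : symmetric (@pathrel n).
Proof. by move=> a b; rewrite /pathrel orbC. Qed.
Lemma pathrel_irr n (a : 'I_n) : pathrel a a = false.
Proof. rewrite /pathrel; apply/negbTE; lia. Qed.
Lemma boxrel_sym n k : symmetric (@boxrel n k).
Proof. by move=> [a1 a2] [b1 b2]; rewrite /boxrel /= (pathrel_sym a1) (pathrel_sym a2) (eq_sym a1) (eq_sym a2). Qed.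

Lemma is_hom_walk a (U : finType) (H : rel U) (f : {ffun 'I_a -> U}) :
  symmetric H -> is_hom (@pathrel a) H f = walkP H f.
Proof.
move=> Hs; apply/idP/idP => /forallP W; apply/forallP => x; apply/forallP => y.
- apply/implyP => xy; have := forallP (W x) y; rewrite /pathrel xy; apply.
- apply/implyP; rewrite /pathrel => /orP[xy|yx].
  + by have := forallP (W x) y; rewrite xy; apply.
  + by have := forallP (W y) x; rewrite yx Hs; apply.
Qed.

Lemma is_whom_walk a (U : finType) (H : rel U) (f : {ffun 'I_a -> U}) :
  symmetric H -> is_whom (@pathrel a) H f = walkP (fun x y => (x == y) || H x y) f.
Proof.
move=> Hs; apply/idP/idP => /forallP W; apply/forallP => x; apply/forallP => y.
- apply/implyP => xy; have := forallP (W x) y; rewrite /pathrel xy; apply.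
- apply/implyP; rewrite /pathrel => /orP[xy|yx].
  + by have := forallP (W x) y; rewrite xy; apply.
  + by have := forallP (W y) x; rewrite yx Hs eq_sym; apply.
Qed.

Lemma ex0P a (P : 'I_a.+1 -> bool) : [exists x, (val x == 0) && P x] = P ord0.
Proof.
apply/existsP/idP => [[x /andP[/eqP x0 Px]]|P0]; last by exists ord0.
by have <- : x = ord0 by apply/val_inj.
Qed.

Definition Rw k := fun x y : 'I_k => (x == y) || pathrel x y.
Definition Rb n k := fun x y : 'I_n * 'I_k => (x == y) || boxrel x y.

Lemma nHom_at_eq h n i (hi : i < n) : nHom_at h.+1 n i = walkc (@pathrel n) h (Ordinal hi).
Proof.
rewrite /nHom_at -card_Sw; apply: eq_card => f; rewrite !inE is_hom_walk ?ex0P;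
  last exact: pathrel_sym.
congr (_ && _); apply/eqP/eqP => [e|->] //; exact: val_inj.
Qed.

Lemma nWHom_at_eq a k j (hj : j < k) : nWHom_at a.+1 k j = walkc (@Rw k) a (Ordinal hj).
Proof.
rewrite /nWHom_at -card_Sw; apply: eq_card => f; rewrite !inE is_whom_walk ?ex0P;
  last exact: pathrel_sym.
congr (_ && _); apply/eqP/eqP => [e|->] //; exact: val_inj.
Qed.

Lemma nWHom_grid_at_eq M n k i j (hi : i < n) (hj : j < k) :
  nWHom_grid_at M.+1 n k i j = walkc (@Rb n k) M (Ordinal hi, Ordinal hj).
Proof.
rewrite /nWHom_grid_at -card_Sw; apply: eq_card => f; rewrite !inE is_whom_walk ?ex0P;
  last exact: boxrel_sym.
by congr (_ && _); case: (f ord0) => a b /=.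
Qed.

Lemma grid_sum M n k : nWHom_grid M.+1 n k = \sum_v walkc (@Rb n k) M v.
Proof.
rewrite /nWHom_grid -sum1_card.
rewrite (partition_big (fun g : {ffun 'I_M.+1 -> 'I_n * 'I_k} => g ord0) predT) //.
apply: eq_bigr => v _; rewrite -card_Sw -sum1_card; apply: eq_bigl => g.
by rewrite !inE is_whom_walk //; exact: boxrel_sym.
Qed.

Lemma Rw_rec k a (j : 'I_k) : walkc (@Rw k) a.+1 j =
  walkc (@Rw k) a j + \sum_(j' | pathrel j j') walkc (@Rw k) a j'.
Proof.
rewrite /= (bigD1 j) /Rw ?eqxx //=; congr (_ + _); apply: eq_bigl => u.
case: (eqVneq u j) => [->|ne]; first by rewrite pathrel_irr andbF.
by rewrite andbT.
Qed.

Lemma sum_pair (I J : finType) (F : I * J -> nat) : \sum_u F u = \sum_a \sum_b F (a, b).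
Proof. by rewrite pair_big; apply: eq_bigr => [[a b]]. Qed.

Lemma sum_cond_pair (I J : finType) (F : I -> J -> nat) (P : pred I) (Q : pred J) :
  \sum_a \sum_b (if P a && Q b then F a b else 0) = \sum_(a | P a) \sum_(b | Q b) F a b.
Proof.
rewrite [RHS]big_mkcond; apply: eq_bigr => a _.
case: (P a) => /=; first by rewrite [RHS]big_mkcond.
by rewrite big1.
Qed.

Lemma Rb_rec n k M (i : 'I_n) (j : 'I_k) : walkc (@Rb n k) M.+1 (i, j) =
  walkc (@Rb n k) M (i, j) + \sum_(i' | pathrel i i') walkc (@Rb n k) M (i', j)
  + \sum_(j' | pathrel j j') walkc (@Rb n k) M (i, j').
Proof.
set F := walkc (@Rb n k) M.
rewrite /= (bigD1 (i, j)); last by rewrite /Rb eqxx.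
rewrite -addnA; congr (_ + _).
rewrite (eq_bigl (fun u => boxrel (i, j) u)); last first.
  move=> u; rewrite /Rb; case: (eqVneq u (i, j)) => [->|ne].
    by rewrite /boxrel /= !pathrel_irr /= !andbF.
  by rewrite andbT.
rewrite big_mkcond.
rewrite (eq_bigr (fun u => (if pathrel i u.1 && (j == u.2) then F u else 0)
   + (if (i == u.1) && pathrel j u.2 then F u else 0))); last first.
  move=> [a b] _; rewrite /boxrel /=.
  case: (eqVneq i a) => [<-|na]; rewrite ?pathrel_irr /= ?andbF ?orbF ?addn0 //.
rewrite big_split /= !sum_pair !sum_cond_pair; congr (_ + _).
  apply: eq_bigr => a _; rewrite (eq_bigl (fun b => b == j)) ?big_pred1_eq //.
by rewrite (eq_bigl (fun a => a == i)) ?big_pred1_eq // => a; rewrite eq_sym.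
Qed.

Lemma conv_id (n k : nat) (G : nat -> 'I_n * 'I_k -> nat) (H : nat -> 'I_n -> nat)
  (W : nat -> 'I_k -> nat) (p : rel 'I_n) (q : rel 'I_k) :
  (forall v, G 0 v = 1) -> (forall i, H 0 i = 1) -> (forall j, W 0 j = 1) ->
  (forall M i j, G M.+1 (i, j) = G M (i, j) + \sum_(i' | p i i') G M (i', j)
                                 + \sum_(j' | q j j') G M (i, j')) ->
  (forall h i, H h.+1 i = \sum_(i' | p i i') H h i') ->
  (forall a j, W a.+1 j = W a j + \sum_(j' | q j j') W a j') ->
  forall M i j, G M (i, j) = \sum_(0 <= h < M.+1) 'C(M, h) * H h i * W (M - h) j.
Proof.
move=> G0 H0 W0 GS HS WS; elim=> [|M IH] i j.
  by rewrite big_nat1 G0 H0 W0.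
rewrite GS IH.
under [\sum_(i' | p i i') _]eq_bigr => i' _ do rewrite IH.
under [\sum_(j' | q j j') _]eq_bigr => j' _ do rewrite IH.
have eB : \sum_(i' | p i i') \sum_(0 <= h < M.+1) 'C(M, h) * H h i' * W (M - h) j
    = \sum_(0 <= h < M.+1) 'C(M, h) * H h.+1 i * W (M - h) j.
  rewrite exchange_big; apply: eq_bigr => h _.
  by rewrite HS big_distrr big_distrl.
have eAC : \sum_(0 <= h < M.+1) 'C(M, h) * H h i * W (M - h) j
    + \sum_(j' | q j j') \sum_(0 <= h < M.+1) 'C(M, h) * H h i * W (M - h) j'
    = \sum_(0 <= h < M.+1) 'C(M, h) * H h i * W (M.+1 - h) j.
  rewrite exchange_big -big_split; apply: eq_big_nat => h /andP[_ hM].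
  by rewrite subSn // WS mulnDr big_distrr.
rewrite eB addnAC eAC.
rewrite [RHS]big_nat_recl // bin0 subn0.
under [in RHS]eq_bigr do rewrite binS mulnDl mulnDl subSS.
rewrite big_split /= addnA; congr (_ + _).
rewrite [in RHS]big_nat_recr //= bin_small // !mul0n addn0.
rewrite big_nat_recl // bin0 subn0.
by under eq_bigr do rewrite subSS.
Qed.

Lemma pathrel_rev n (x y : 'I_n) : pathrel (rev_ord x) (rev_ord y) = pathrel x y.
Proof.
rewrite /pathrel /=; have := ltn_ord x; have := ltn_ord y.
by case: x => x hx; case: y => y hy /= _ _; apply/idP/idP; lia.
Qed.

Lemma Rb_symi n k (a b : 'I_n * 'I_k) :
  Rb ((rev_ord a.1, a.2)) ((rev_ord b.1, b.2)) = Rb a b.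
Proof.
case: a b => [a1 a2] [b1 b2]; rewrite /Rb /boxrel /= pathrel_rev.
by rewrite !xpair_eqE (inj_eq rev_ord_inj).
Qed.

Lemma Rb_symj n k (a b : 'I_n * 'I_k) :
  Rb ((a.1, rev_ord a.2)) ((b.1, rev_ord b.2)) = Rb a b.
Proof.
case: a b => [a1 a2] [b1 b2]; rewrite /Rb /boxrel /= pathrel_rev.
by rewrite !xpair_eqE (inj_eq rev_ord_inj).
Qed.

Lemma sym_i M n k i j : i < n -> j < k ->
  nWHom_grid_at M.+1 n k i j = nWHom_grid_at M.+1 n k (n.-1 - i) j.
Proof.
move=> hi hj; have hi' : n.-1 - i < n by lia.
rewrite !(nWHom_grid_at_eq M hi hj) (nWHom_grid_at_eq M hi' hj).
have -> : (Ordinal hi, Ordinal hj) =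
   (fun u : 'I_n * 'I_k => (rev_ord u.1, u.2)) (Ordinal hi', Ordinal hj).
  by congr pair; apply/val_inj => /=; lia.
apply: (@walkc_sym _ (@Rb n k) (fun u : 'I_n * 'I_k => (rev_ord u.1, u.2))); last exact: Rb_symi.
by move=> [a b] /=; rewrite rev_ordK.
Qed.

Lemma sym_j M n k i j : i < n -> j < k ->
  nWHom_grid_at M.+1 n k i j = nWHom_grid_at M.+1 n k i (k.-1 - j).
Proof.
move=> hi hj; have hj' : k.-1 - j < k by lia.
rewrite !(nWHom_grid_at_eq M hi hj) (nWHom_grid_at_eq M hi hj').
have -> : (Ordinal hi, Ordinal hj) =
   (fun u : 'I_n * 'I_k => (u.1, rev_ord u.2)) (Ordinal hi, Ordinal hj').
  by congr pair; apply/val_inj => /=; lia.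
apply: (@walkc_sym _ (@Rb n k) (fun u : 'I_n * 'I_k => (u.1, rev_ord u.2))); last exact: Rb_symj.
by move=> [a b] /=; rewrite rev_ordK.
Qed.

Lemma grid_sum2 M n k : nWHom_grid M.+1 n k =
  \sum_(0 <= i < n) \sum_(0 <= j < k) nWHom_grid_at M.+1 n k i j.
Proof.
rewrite grid_sum sum_pair big_mkord; apply: eq_bigr => i _.
rewrite big_mkord; apply: eq_bigr => j _.
rewrite (nWHom_grid_at_eq M (ltn_ord i) (ltn_ord j)).
by congr walkc; congr pair; apply/val_inj.
Qed.

From mathcomp Require Import ring.
Local Open Scope ring_scope.

Lemma half_sum (G : nat -> rat) n : (forall i, (i < n)%N -> G i = G (n.-1 - i)%N) ->
  \sum_(0 <= i < n) G i = 2 * \sum_(0 <= i < n./2) G i + (1 - (-1) ^+ n) / 2 * G n./2.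
Proof.
move=> GS.
have key : forall o, n = (n./2 + o + n./2)%N ->
    \sum_(n./2 + o <= i < n) G i = \sum_(0 <= i < n./2) G i.
  move=> o en.
  rewrite -{1}(add0n (n./2 + o)%N) big_addn.
  have -> : (n - (n./2 + o) = n./2)%N by lia.
  rewrite [RHS]big_nat_rev; apply: eq_big_nat => i /andP[_ hi].
  rewrite GS; last lia.
  congr G; lia.
have en := odd_double_half n; rewrite -addnn in en.
rewrite -signr_odd; case Ho: (odd n) en => /= en.
  have h1 : (n./2 <= n)%N by lia.
  have h2 : (n./2 <= n./2 + 1)%N by lia.
  have h3 : (n./2 + 1 <= n)%N by lia.
  rewrite (big_cat_nat (n := n./2)) //= (big_cat_nat h2 h3) /=.
  rewrite key; last lia.
  rewrite addn1 big_nat1 expr1; by field.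
have h0 : (n./2 <= n)%N by lia.
rewrite (big_cat_nat (n := n./2)) //=.
rewrite (_ : \sum_(n./2 <= i < n) G i = \sum_(0 <= i < n./2) G i); last first.
  by have := key 0%N; rewrite !addn0; apply; lia.
rewrite expr0; by field.
Qed.

Theorem theorem4 (m n k : nat) (hm : (0 < m)%N) (hn : (0 < n)%N) (hk : (0 < k)%N) :
  ((nWHom_grid m n k)%:R : rat) =
    4 * \sum_(0 <= i < n./2) \sum_(0 <= j < k./2) (nWHom_grid_at m n k i j)%:R
    + (1 - (-1) ^+ n) * \sum_(0 <= j < k./2) (nWHom_grid_at m n k n./2 j)%:R
    + (1 - (-1) ^+ k) * \sum_(0 <= i < n./2) (nWHom_grid_at m n k i k./2)%:R
    + 4^-1 * (1 - (-1) ^+ n) * (1 - (-1) ^+ k) * (nWHom_grid_at m n k n./2 k./2)%:R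
  /\
  (forall i j : nat, (i < n)%N -> (j < k)%N ->
     nWHom_grid_at m n k i j =
       \sum_(0 <= h < m) 'C(m.-1, h) * nHom_at h.+1 n i * nWHom_at (m - h) k j)%N.
Proof.
case: m hm => // M _; split; last first.
  move=> i j hi hj.
  rewrite (nWHom_grid_at_eq M hi hj).
  rewrite (@conv_id n k (walkc (@Rb n k)) (walkc (@pathrel n)) (walkc (@Rw k))
     (@pathrel n) (@pathrel k)) //=; last first.
  - exact: Rw_rec.
  - exact: Rb_rec.
  apply: eq_big_nat => h /andP[_ hh].
  rewrite (nHom_at_eq h hi) subSn // (nWHom_at_eq _ hj) //.
set A := nWHom_grid_at M.+1 n k.
have hn2 : (n./2 < n)%N by rewrite -divn2 ltn_Pdiv.
have hk2 : (k./2 < k)%N by rewrite -divn2 ltn_Pdiv.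
have Fj : forall i, (i < n)%N -> \sum_(0 <= j < k) (A i j)%:R =
    2 * \sum_(0 <= j < k./2) (A i j)%:R + (1 - (-1) ^+ k) / 2 * (A i k./2)%:R :> rat.
  move=> i hi; rewrite half_sum // => j hj; rewrite /A -sym_j //.
rewrite grid_sum2 natr_sum.
under eq_bigr do rewrite natr_sum.
rewrite half_sum; last first.
  move=> i hi; apply: eq_big_nat => j /andP[_ hj]; rewrite /A -sym_i //; lia.
rewrite Fj //.
rewrite (eq_big_nat _ _ (F2 := fun i => 2 * \sum_(0 <= j < k./2) (A i j)%:R
   + (1 - (-1) ^+ k) / 2 * (A i k./2)%:R)); last first.
  move=> i /andP[_ hi]; apply: Fj; lia.
rewrite big_split /= -!mulr_sumr.
by field.
Qed.
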